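(* Let $L$ be an odd unimodular lattice in dimension $n\equiv 0\pmod 8$ which contains a $k$-frame. Then both even unimodular neighbors $L_0\cup L_1$ and $L_0\cup L_3$ of $L$ contain a $2k$-frame.
   Context: A lattice $L\subset\mathbb{R}^n$ is unimodular if $L=L^*$, where $L^*=\{x\in\mathbb{R}^n:(x,y)\in\mathbb{Z}\ \forall y\in L\}$; it is odd if it contains a vector of odd norm $(x,x)$. For an odd unimodular lattice $L$, let $L_0$ be the sublattice of vectors of even norm (index $2$ in $L$); then $L_0^*=L_0\cup L_1\cup L_2\cup L_3$ for cosets $L_1,L_2,L_3$ of $L_0$ with $L=L_0\cup L_2$. When $n\equiv 0\pmod 8$, $L_0\cup L_1$ and $L_0\cup L_3$ are even unimodular lattices, called the even unimodular neighbors of $L$. A $t$-frame of a lattice in dimension $n$ is a set of $n$ lattice vectors $f_1,\dots,f_n$ with $(f_i,f_j)=t\,\delta_{i,j}$. *)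

(* Defs.v *)
From HB Require Import structures.
From mathcomp Require Import all_boot all_order all_algebra.
From mathcomp Require Import reals.
Set Implicit Arguments. Unset Strict Implicit. Unset Printing Implicit Defensive.
Import Order.TTheory GRing.Theory Num.Theory.
Local Open Scope ring_scope.

Section Lattices.
Variables (R : realType) (n : nat).

Definition dotv (x y : 'rV[R]_n) : R := \sum_(i < n) x 0 i * y 0 i.

Definition is_integer (a : R) : Prop := exists z : int, a = z%:~R.

Definition is_lattice (L : 'rV[R]_n -> Prop) : Prop :=
  exists B : 'M[R]_n, B \in unitmx /\
    forall x, L x <-> exists z : 'rV[int]_n, x = map_mx intr z *m B.

Definition dual (L : 'rV[R]_n -> Prop) (x : 'rV[R]_n) : Prop :=
  forall y, L y -> is_integer (dotv x y).

Definition unimodular (L : 'rV[R]_n -> Prop) : Prop :=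
  is_lattice L /\ forall x, L x <-> dual L x.

Definition odd_norm (x : 'rV[R]_n) : Prop :=
  exists z : int, dotv x x = z%:~R /\ ~~ (2 %| z)%Z.

Definition even_norm (x : 'rV[R]_n) : Prop :=
  exists z : int, dotv x x = (2 * z)%:~R.

Definition odd_lattice (L : 'rV[R]_n -> Prop) : Prop :=
  exists x, L x /\ odd_norm x.

Definition even_part (L : 'rV[R]_n -> Prop) (x : 'rV[R]_n) : Prop :=
  L x /\ even_norm x.

(* the union L_0 u (v + L_0) of L_0 and the coset of L_0 containing v *)
Definition coset_union (L : 'rV[R]_n -> Prop) (v x : 'rV[R]_n) : Prop :=
  even_part L x \/ even_part L (x - v).

Definition has_frame (M : 'rV[R]_n -> Prop) (t : R) : Prop :=
  exists f : 'I_n -> 'rV[R]_n,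
    (forall i, M (f i)) /\
    (forall i j, dotv (f i) (f j) = if i == j then t else 0).

End Lattices.

(* Main.v *)
Require Import Defs.
From HB Require Import structures.
From mathcomp Require Import all_boot all_order all_algebra.
From mathcomp Require Import reals.
From mathcomp Require Import zify.
Import Order.TTheory GRing.Theory Num.Theory.
Local Open Scope ring_scope.

Section Helpers.
Variables (R : realType) (n : nat).

Lemma dotvDl (x y z : 'rV[R]_n) : dotv (x + y) z = dotv x z + dotv y z.
Proof. by rewrite /dotv -big_split; apply: eq_bigr => i _; rewrite mxE mulrDl. Qed.

Lemma dotvDr (x y z : 'rV[R]_n) : dotv z (x + y) = dotv z x + dotv z y.
Proof. by rewrite /dotv -big_split; apply: eq_bigr => i _; rewrite mxE mulrDr. Qed.

Lemma dotvZl a (x y : 'rV[R]_n) : dotv (a *: x) y = a * dotv x y.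
Proof. by rewrite /dotv mulr_sumr; apply: eq_bigr => i _; rewrite mxE mulrA. Qed.

Lemma dotvZr a (x y : 'rV[R]_n) : dotv x (a *: y) = a * dotv x y.
Proof. by rewrite /dotv mulr_sumr; apply: eq_bigr => i _; rewrite mxE mulrCA. Qed.

Lemma lat_add (L : 'rV[R]_n -> Prop) x y :
  is_lattice L -> L x -> L y -> L (x + y).
Proof.
move=> [B [_ HB]] /HB [z ->] /HB [w ->]; apply/HB; exists (z + w).
by rewrite map_mxD mulmxDl.
Qed.

Lemma lat_sign (L : 'rV[R]_n -> Prop) (b : bool) x :
  is_lattice L -> L x -> L ((-1) ^+ b *: x).
Proof.
move=> [B [_ HB]] /HB [z ->]; apply/HB; case: b.
  by exists (- z); rewrite expr1 scaleN1r map_mxN mulNmx.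
by exists z; rewrite expr0 scale1r.
Qed.
End Helpers.

Theorem lemma3p2 (R : realType) (n : nat) (L : 'rV[R]_n -> Prop) (k : R) :
  (n %% 8 = 0)%N ->
  unimodular L -> odd_lattice L ->
  has_frame L k ->
  forall v : 'rV[R]_n, dual (even_part L) v -> ~ L v ->
    has_frame (coset_union L v) (2 * k).
Proof.
move=> n8 [latL uniL] _ [f [fL fD]] v _ _.
have ha (i : 'I_n) : ((i %/ 2) * 2 < n)%N by have := ltn_ord i; lia.
have hb (i : 'I_n) : ((i %/ 2) * 2 + 1 < n)%N by have := ltn_ord i; lia.
pose a (i : 'I_n) : 'I_n := Ordinal (ha i).
pose b (i : 'I_n) : 'I_n := Ordinal (hb i).
pose c (i : 'I_n) : R := (-1) ^+ (odd i).
have cc (i : 'I_n) : c i * c i = 1.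
  by rewrite /c; case: (odd i); rewrite ?expr1 ?expr0 ?mulrNN mulr1.
exists (fun i => f (a i) + c i *: f (b i)); split.
  move=> i; left; split; first by apply: lat_add => //; apply: lat_sign.
  have /uniL /(_ (f i) (fL i)) [z hz] := fL i.
  rewrite fD eqxx in hz.
  exists z.
  rewrite dotvDl !dotvDr !dotvZl !dotvZr !fD.
  have -> : (a i == b i) = false by apply/eqP => /(congr1 val) /=; lia.
  have -> : (b i == a i) = false by apply/eqP => /(congr1 val) /=; lia.
  rewrite !eqxx mulr0 add0r addr0 mulrA cc mul1r hz.
  by rewrite intrM /= -mulr2n mulr_natl.
move=> i j.
rewrite dotvDl !dotvDr !dotvZl !dotvZr !fD.
have -> : (a i == b j) = false by apply/eqP => /(congr1 val) /=; lia.
have -> : (b i == a j) = false by apply/eqP => /(congr1 val) /=; lia.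
have -> : (b i == b j) = (a i == a j).
  by apply/idP/idP => /eqP /(congr1 val) /= h; apply/eqP/val_inj => /=; lia.
rewrite !mulr0 add0r addr0.
have [eij | nij] := eqVneq i j.
  by rewrite -eij !eqxx mulrA cc mul1r -mulr2n mulr_natl.
case: eqP => /= [/(congr1 val) /= eab | _]; last by rewrite !mulr0 addr0.
have hodd : odd i != odd j.
  apply: contra nij => /eqP ho; apply/eqP/val_inj => /=.
  have := odd_double_half i; have := odd_double_half j.
  move: ho eab; rewrite /=; lia.
rewrite /c mulrA -exprD.
by case: (odd i) (odd j) hodd => [] [] //= _; rewrite expr1 mulN1r addrN.
Qed.
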